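(* Let $E$ be a real affine space of dimension $n$ with a system of coordinates $\mathcal L=(\ell_1,\dots,\ell_n)$. Every $\mu\in\mathcal M^*(E)$ has at most one center with respect to $\mathcal L$. Moreover, for $1\le k\le n$, the first $k$ coordinates of the center depend only on the restriction of $\mu$ to $\mathcal B_E(\ell_1,\dots,\ell_k)$: if $\mu,\nu\in\mathcal M^*(E)$ satisfy $\mu(A)=\nu(A)$ for all $A\in\mathcal B_E(\ell_1,\dots,\ell_k)$, and $x$, $y$ are centers with respect to $\mathcal L$ of $\mu$ and $\nu$ respectively, then $(x_1,\dots,x_k)=(y_1,\dots,y_k)$.
   Context: $\vec E$ is the vector space of $E$. A partition of $E$ is a collection of subsets covering $E$ whose distinct members have disjoint interiors. Yao-Yao partitions and their centers are defined by induction on dimension: if $E=\{x\}$, the Yao-Yao partition is $\{\{x\}\}$, with center $x$; if $\dim E=n\ge1$, $\mathcal P$ is a Yao-Yao partition of $E$ with center $x$ if there exist an affine hyperplane $F$, a vector $v\in\vec E\setminus\vec F$ and two Yao-Yao partitions $\mathcal P_1,\mathcal P_{-1}$ of $F$ with the same center $x$ such that $\mathcal P=\{A+\mathbb R_-v: A\in\mathcal P_{-1}\}\cup\{A+\mathbb R_+v: A\in\mathcal P_1\}$. A system of coordinates is a family $(\ell_1,\dots,\ell_n)$ of affine forms such that $x\mapsto(\ell_i(x))_i$ is a bijection $E\to\mathbb R^n$; write $x_i=\ell_i(x)$. Such a partition, given by $F,v,x,\mathcal P_1,\mathcal P_{-1}$, is adapted to $(\ell_1,\dots,\ell_n)$ if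 $F=\{z: z_1=x_1\}$ and $\mathcal P_1,\mathcal P_{-1}$ are adapted to $(\ell_2|_F,\dots,\ell_n|_F)$ (in dimension $0$ every Yao-Yao partition is adapted). $\mathcal M(E)$ is the set of finite non-negative Borel measures on $E$ vanishing on every affine hyperplane; $\mathcal M^*(E)$ is the set of $\mu\in\mathcal M(E)$ with $\mu(U)>0$ for every nonempty open set $U$. A Yao-Yao equipartition for $\mu$ is a Yao-Yao partition $\mathcal P$ with $\mu(A)=2^{-n}\mu(E)$ for all $A\in\mathcal P$. A center of $\mu$ with respect to $\mathcal L$ is the center of a Yao-Yao equipartition for $\mu$ adapted to $\mathcal L$. $\mathcal B_E(\ell_1,\dots,\ell_k)$ is the smallest $\sigma$-algebra of subsets of $E$ making $\ell_1,\dots,\ell_k$ measurable. *)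

(* Defs.v *)
From HB Require Import structures.
From mathcomp Require Import all_boot all_order all_algebra.
From mathcomp Require Import all_classical all_reals all_analysis.
Set Implicit Arguments. Unset Strict Implicit. Unset Printing Implicit Defensive.
Import Order.TTheory GRing.Theory Num.Theory numFieldNormedType.Exports.
Local Open Scope classical_set_scope.
Local Open Scope ring_scope.

Section YY.
Variables (R : realType) (n : nat).
Local Notation V := 'rV[R]_n.

Definition Borel_space := g_sigma_algebraType (@open V).

Definition affine_form (f : V -> R) : Prop :=
  forall (x y : V) (t : R), f (t *: x + (1 - t) *: y) = t * f x + (1 - t) * f y.

Definition lin_part (f : V -> R) (v : V) : R := f v - f 0.

Definition coord_system (L : 'I_n -> V -> R) : Prop :=
  (forall i, affine_form (L i)) /\ bijective (fun x : V => \row_i L i x).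

Definition cone_neg (A : set V) (v : V) : set V :=
  [set z | exists a t, A a /\ t <= 0 /\ z = a + t *: v].
Definition cone_pos (A : set V) (v : V) : set V :=
  [set z | exists a t, A a /\ 0 <= t /\ z = a + t *: v].

(** [YYA L x k P]: P is a Yao-Yao partition, with center x, of the affine
    subspace F_k = {z | l_i z = l_i x for all i < k}, adapted to the
    coordinate system (l_k|F_k, ..., l_{n-1}|F_k).  (Indices are 0-based.)
    At step k the hyperplane of F_k is F_{k+1} = {z in F_k | l_k z = l_k x},
    and v ranges over the direction of F_k minus the direction of F_{k+1}. *)
Inductive YYA (L : 'I_n -> V -> R) (x : V) : nat -> set (set V) -> Prop :=
  | YYA_point : YYA L x n [set [set x]]
  | YYA_step (k : 'I_n) (v : V) (P1 Pm1 : set (set V)) :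
      (forall i : 'I_n, (i < k)%N -> lin_part (L i) v = 0) ->
      lin_part (L k) v != 0 ->
      YYA L x k.+1 P1 -> YYA L x k.+1 Pm1 ->
      YYA L x k ([set cone_neg A v | A in Pm1] `|` [set cone_pos A v | A in P1]).

Definition YY_adapted (L : 'I_n -> V -> R) (x : V) (P : set (set V)) : Prop :=
  YYA L x 0 P.

Definition affine_hyperplane (H : set V) : Prop :=
  exists (c : 'cV[R]_n) (b : R), c != 0 /\ H = [set z | (z *m c) 0 0 = b].

Definition in_M (mu : {finite_measure set Borel_space -> \bar R}) : Prop :=
  forall H, affine_hyperplane H -> mu H = 0%E.
Definition in_Mstar (mu : {finite_measure set Borel_space -> \bar R}) : Prop :=
  in_M mu /\ forall U : set V, open U -> U !=set0 -> (0 < mu U)%E.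

Definition YY_equipartition (mu : {finite_measure set Borel_space -> \bar R})
  (P : set (set V)) : Prop :=
  forall A, P A -> mu A = ((2 ^- n)%:E * mu setT)%E.

Definition is_center (mu : {finite_measure set Borel_space -> \bar R})
  (L : 'I_n -> V -> R) (x : V) : Prop :=
  exists P, YY_adapted L x P /\ YY_equipartition mu P.

Definition B_first (L : 'I_n -> V -> R) (k : nat) (hk : (k <= n)%N) : set (set V) :=
  g_sigma_preimage (fun i : 'I_k => L (widen_ord hk i)).

End YY.

(* Main.v *)
Require Import Defs.
From HB Require Import structures.
From mathcomp Require Import all_boot all_order all_algebra.
From mathcomp Require Import all_classical all_reals all_analysis.
From mathcomp Require Import ring lra.
Import Order.TTheory GRing.Theory Num.Theory numFieldNormedType.Exports.
Local Open Scope classical_set_scope.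
Local Open Scope ring_scope.
Set Implicit Arguments. Unset Strict Implicit.

Section Aff.
Variables (R : realType) (n : nat).
Local Notation V := 'rV[R]_n.

Lemma aff_scale (f : V -> R) : affine_form f -> forall t v,
  f (t *: v) = t * f v + (1 - t) * f 0.
Proof. by move=> Hf t v; have := Hf v 0 t; rewrite scaler0 addr0. Qed.

Lemma aff_add0 (f : V -> R) : affine_form f -> forall a b,
  f (a + b) = f a + f b - f 0.
Proof.
move=> Hf a b.
have H2 : forall c : V, f (2 *: c) = 2 * f c - f 0.
  by move=> c; rewrite aff_scale //; ring.
have := Hf (2 *: a) (2 *: b) (2^-1).
have -> : (1 - 2^-1 : R) = 2^-1 by field.
rewrite !scalerA mulVf ?pnatr_eq0 // !scale1r => ->.
by rewrite !H2; field.
Qed.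

Lemma aff_add (f : V -> R) : affine_form f -> forall a t v,
  f (a + t *: v) = f a + t * lin_part f v.
Proof.
move=> Hf a t v; rewrite aff_add0 // aff_scale // /lin_part; ring.
Qed.

Lemma lin_scale (f : V -> R) : affine_form f -> forall t v,
  lin_part f (t *: v) = t * lin_part f v.
Proof. by move=> Hf t v; rewrite /lin_part aff_scale //; ring. Qed.

Lemma lin_add (f : V -> R) : affine_form f -> forall a b,
  lin_part f (a + b) = lin_part f a + lin_part f b.
Proof. by move=> Hf a b; rewrite /lin_part aff_add0 //; ring. Qed.

Lemma lin0 (f : V -> R) : lin_part f 0 = 0.
Proof. by rewrite /lin_part subrr. Qed.

Lemma aff_sum (f : V -> R) : affine_form f -> forall (I : Type) (l : seq I)
  (r : I -> R) (u : I -> V) a,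
  f (a + \sum_(s <- l) r s *: u s) = f a + \sum_(s <- l) r s * lin_part f (u s).
Proof.
move=> Hf I l r u; elim: l => [|s l IH] a.
  by rewrite !big_nil !addr0.
by rewrite !big_cons addrA IH aff_add // addrA.
Qed.

Lemma lin_sum (f : V -> R) : affine_form f -> forall (I : Type) (l : seq I)
  (u : I -> V), lin_part f (\sum_(s <- l) u s) = \sum_(s <- l) lin_part f (u s).
Proof.
move=> Hf I l u; elim: l => [|s l IH]; first by rewrite !big_nil lin0.
by rewrite !big_cons lin_add // IH.
Qed.

Lemma aff_continuous (f : V -> R) : affine_form f -> continuous f.
Proof.
move=> Hf.
have E : forall z : V, f z = f 0 + \sum_(j < n) z ord0 j * lin_part f (delta_mx ord0 j).
  move=> z; rewrite {1}(matrix_sum_delta z) big_ord1.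
  have := aff_sum Hf (index_enum 'I_n) (fun j => z ord0 j) (fun j => delta_mx ord0 j) 0.
  by rewrite add0r.
have -> : f = fun z => f 0 + \sum_(j < n) z ord0 j * lin_part f (delta_mx ord0 j).
  by apply: funext => z; rewrite E.
have HS : forall (s : seq 'I_n), continuous (fun z : V =>
    \sum_(j <- s) z ord0 j * lin_part f (delta_mx ord0 j)).
  elim => [|j s IH] z.
    under eq_fun do rewrite big_nil; exact: cst_continuous.
  under eq_fun do rewrite big_cons.
  apply: (@continuousD _ _ _ (fun z : V => z ord0 j * lin_part f (delta_mx ord0 j))
    (fun z : V => \sum_(j <- s) z ord0 j * lin_part f (delta_mx ord0 j))); last exact: IH.
  apply: (@continuousM _ _ (fun z : V => z ord0 j) (fun=> lin_part f (delta_mx ord0 j))).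
    exact: coord_continuous.
  exact: cst_continuous.
move=> w; apply: (@continuousD _ _ _ (fun=> f 0) (fun z : V =>
    \sum_(j < n) z ord0 j * lin_part f (delta_mx ord0 j))).
  exact: cst_continuous.
exact: HS.
Qed.

End Aff.
Section Main.
Variables (R : realType) (n : nat) (L : 'I_n -> 'rV[R]_n -> R).
Local Notation V := 'rV[R]_n.
Hypothesis HL : coord_system L.

Definition ln (k : nat) : V -> R := oapp L (fun _ => 0) (insub k).

Lemma lnE (i : 'I_n) : ln i = L i.
Proof. by rewrite /ln valK. Qed.

Lemma lnE' (k : nat) (hk : (k < n)%N) : ln k = L (Ordinal hk).
Proof. by rewrite -lnE. Qed.

Lemma ln_aff k : affine_form (ln k).
Proof.
rewrite /ln; case: insubP => [i _ _|_] /=; first by case: HL.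
by move=> a b t; ring.
Qed.

Lemma ln_cont k : continuous (ln k).
Proof. exact: aff_continuous (ln_aff k). Qed.

Definition sgn (b : bool) (r : R) : Prop := if b then 0 <= r else r <= 0.
Definition pre (q : nat -> bool) (m : nat) : seq bool := mkseq q m.
Fixpoint pt (x : V) (d : seq bool -> V) (k : nat) (q : nat -> bool) (m : nat) (z : V) : V :=
  if m is m'.+1 then
    let w := pt x d k q m' z in w - (ln (k + m') w - ln (k + m') x) *: d (pre q m')
  else z.
Definition gv x d k q m z := ln (k + m) (pt x d k q m z) - ln (k + m) x.
Definition Fk (x : V) k (z : V) := forall i : 'I_n, (i < k)%N -> L i z = L i x.
Definition Cone x d k q := [set z | Fk x k z /\
  forall m, (m < n - k)%N -> sgn (q m) (gv x d k q m z)].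
Definition valid (d : seq bool -> V) k := forall p, (size p + k < n)%N ->
  lin_part (ln (k + size p)) (d p) = 1 /\
  forall i, (i < k + size p)%N -> lin_part (ln i) (d p) = 0.
Definition qS (q : nat -> bool) := fun m => q m.+1.
Definition conegen (b : bool) (A : set V) (v : V) :=
  [set z | exists a t, A a /\ sgn b t /\ z = a + t *: v].

Lemma conegenE b A v : (if b then cone_pos A v else cone_neg A v) = conegen b A v.
Proof. by case: b. Qed.

Lemma pre_S q m : pre q m.+1 = q 0 :: pre (qS q) m.
Proof.
elim: m => [//|m IH].
by rewrite /pre mkseqS -/(pre q m.+1) IH rcons_cons -mkseqS.
Qed.

Lemma pt_Sn x d k q m z : pt x d k q m.+1 z =
  let w := pt x d k q m z in w - (ln (k + m) w - ln (k + m) x) *: d (pre q m).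
Proof. by []. Qed.

Lemma pt_S x d k q m z : pt x d k q m.+1 z =
  pt x (fun p => d (q 0 :: p)) k.+1 (qS q) m (z - (ln k z - ln k x) *: d [::]).
Proof.
elim: m => [|m IH]; first by rewrite /= addn0.
by rewrite pt_Sn IH [RHS]pt_Sn /= pre_S addSnnS.
Qed.

Lemma gv_S x d k q m z : gv x d k q m.+1 z =
  gv x (fun p => d (q 0 :: p)) k.+1 (qS q) m (z - (ln k z - ln k x) *: d [::]).
Proof. by rewrite /gv pt_S addSnnS. Qed.

Lemma gv_0 x d k q z : gv x d k q 0 z = ln k z - ln k x.
Proof. by rewrite /gv addn0. Qed.

Lemma cone_step x d k q : (k < n)%N -> valid d k ->
  Cone x d k q = conegen (q 0) (Cone x (fun p => d (q 0 :: p)) k.+1 (qS q)) (d [::]).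
Proof.
move=> kn Vd; have [V1 V0] := Vd [::] kn; rewrite addn0 in V1; rewrite /= addn0 in V0.
apply/seteqP; split => z.
- move=> [Fz Hs]; set t := ln k z - ln k x.
  exists (z - t *: d [::]), t; split; last split.
  + split.
    * move=> i; rewrite ltnS leq_eqVlt => /orP[/eqP ik|ik].
      - have -> : i = Ordinal kn by apply: val_inj.
        rewrite -scaleNr aff_add; last by case: HL.
        by rewrite -!lnE /= V1 /t; ring.
      - rewrite -scaleNr aff_add; last by case: HL.
        by rewrite -lnE V0 // lnE Fz //; ring.
    * move=> m hm; rewrite -gv_S; apply: Hs.
      by rewrite subnS in hm; move: hm; case: (n - k)%N => // nk.
  + by rewrite /t -(gv_0 x d k q z); apply: Hs; rewrite subn_gt0.
  + by rewrite subrK.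
- move=> [a [t [[Fa Ha] [st ->]]]].
  have lnk : ln k (a + t *: d [::]) - ln k x = t.
    by rewrite (aff_add (ln_aff k)) V1 (lnE' kn) Fa //=; ring.
  split.
  + move=> i ik; rewrite aff_add; last by case: HL.
    by rewrite -lnE V0 // lnE Fa ?(ltn_trans ik) //; ring.
  + case=> [|m] hm; first by rewrite gv_0 lnk.
    rewrite gv_S lnk addrK; apply: Ha.
    by rewrite subnS; move: hm; case: (n - k)%N.
Qed.

Lemma conegen_scale b A v c : c != 0 ->
  conegen b A (c^-1 *: v) = conegen (b == (0 < c)) A v.
Proof.
move=> c0; have cc : c * c^-1 = 1 by rewrite mulfV.
have hc : 0 < c \/ c < 0.
  by case: (ltrgtP 0 c) => h; [left|right|move: c0; rewrite -h eqxx].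
apply/seteqP; split => z [a [t [Aa [st ->]]]].
- exists a, (t * c^-1); split => //; split; last by rewrite scalerA.
  move: st; rewrite /sgn; case: b; case: hc => hc;
    rewrite ?hc ?(lt_gtF hc) /=; nra.
- exists a, (t * c); split => //; split; last first.
    by rewrite scalerA -mulrA cc mulr1.
  move: st; rewrite /sgn; case: b; case: hc => hc;
    rewrite ?hc ?(lt_gtF hc) /=; nra.
Qed.

Lemma yya_cones x k P : YYA L x k P ->
  exists d, valid d k /\ forall q, P (Cone x d k q).
Proof.
move=> H; elim: H => {k P} [|k v P1 Pm1 Hlo Hk _ [d1 [V1 C1]] _ [dm [Vm Cm]]].
- exists (fun _ => 0); split.
    by move=> p; rewrite ltnNge leq_addl.
  move=> q; suff -> : Cone x (fun _ => 0) n q = [set x] by [].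
  apply/seteqP; split => z.
  + move=> [Fz _]; case: HL => _ /bij_inj Hinj; apply: Hinj.
    by apply/rowP => i; rewrite !mxE; apply: Fz.
  + by move=> ->; split => // m; rewrite subnn.
- set c := lin_part (L k) v.
  pose d' := fun p => if p is b :: p' then (if b == (0 < c) then d1 p' else dm p')
    else c^-1 *: v.
  have Vd : valid d' k.
    move=> [|b p] /=.
    * rewrite add0n addn0 => kn; split.
        by rewrite (lin_scale (ln_aff k)) lnE mulVf.
      move=> i ik; rewrite (lin_scale (ln_aff i)) (lnE' (ltn_trans ik kn)) Hlo ?mulr0 //.
    * rewrite addSnnS => hp; rewrite addnS -addSn.
      by case: (b == (0 < c)); [apply: V1 | apply: Vm].
  exists d'; split => // q; rewrite cone_step //=.
  rewrite conegen_scale //; case E: (q 0 == (0 < c)) => /=.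
  * right; exists (Cone x d1 k.+1 (qS q)) => //.
  * left; exists (Cone x dm k.+1 (qS q)) => //.
Qed.


Definition G x d q m z := gv x d 0 q m z.
Definition Reg x d q j := [set z : V | forall m, (m < j)%N -> sgn (q m) (G x d q m z)].

Lemma Cone0 x d q : Cone x d 0 q = Reg x d q n.
Proof.
apply/seteqP; split => z; rewrite /Cone /Reg /= subn0; first by case.
by move=> H; split => // i; rewrite ltn0.
Qed.

Lemma pt_formula x d q m z i : ln i (pt x d 0 q m z) =
  ln i z - \sum_(t < m) G x d q t z * lin_part (ln i) (d (pre q t)).
Proof.
elim: m => [|m IH]; first by rewrite big_ord0 subr0.
rewrite pt_Sn /= -scaleNr (aff_add (ln_aff i)) IH big_ord_recr /=.
rewrite /G /gv; ring.
Qed.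

Lemma G_formula x d q m z : G x d q m z =
  ln m z - ln m x - \sum_(t < m) G x d q t z * lin_part (ln m) (d (pre q t)).
Proof. rewrite {1}/G /gv add0n pt_formula; ring. Qed.

Lemma pre_eq q q' m : (forall t, (t < m)%N -> q t = q' t) -> pre q m = pre q' m.
Proof.
move=> H; rewrite /pre /mkseq; apply/eq_in_map => t.
by rewrite mem_iota add0n => /andP[_ tm]; apply: H.
Qed.

Lemma pt_eq x d q q' m z : (forall t, (t < m)%N -> q t = q' t) ->
  pt x d 0 q m z = pt x d 0 q' m z.
Proof.
elim: m => [//|m IH] H.
have H' : forall t, (t < m)%N -> q t = q' t.
  by move=> t tm; apply: H; exact: (ltn_trans tm (ltnSn m)).
by rewrite !pt_Sn /= IH // (pre_eq H').
Qed.

Lemma G_eq x d q q' m z : (forall t, (t < m)%N -> q t = q' t) ->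
  G x d q m z = G x d q' m z.
Proof. by move=> H; rewrite /G /gv (pt_eq _ _ _ H). Qed.


Lemma G_surj x d q j (r : nat -> R) : valid d 0 -> (j < n)%N ->
  exists z, forall t, (t <= j)%N -> G x d q t z = r t.
Proof.
move=> Vd jn; exists (x + \sum_(s < j.+1) r s *: d (pre q s)).
set z := _ + _.
have Hlin : forall t, (t <= j)%N -> ln t z - ln t x =
    \sum_(s < t) r s * lin_part (ln t) (d (pre q s)) + r t.
  move=> t tj; rewrite /z (aff_sum (ln_aff t)) addrC addKr.
  rewrite -(big_mkord xpredT (fun s => r s * lin_part (ln t) (d (pre q s)))).
  rewrite -(big_mkord xpredT (fun s => r s * lin_part (ln t) (d (pre q s)))).
  rewrite (@big_cat_nat _ _ _ t 0 j.+1 _ _ (leq0n t) (leqW tj)) /=.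
  rewrite (@big_ltn _ _ _ t j.+1) ?ltnS //.
  have tn : (t < n)%N := leq_ltn_trans tj jn.
  have [V1 _] := Vd (pre q t) ltac:(by rewrite size_mkseq addn0).
  rewrite size_mkseq add0n in V1.
  rewrite V1 mulr1.
  have Z : \sum_(t.+1 <= i < j.+1) r i * lin_part (ln t) (d (pre q i)) = 0.
    rewrite big1_seq // => s /=; rewrite mem_index_iota => /andP[ts sj].
    have sn : (s < n)%N by rewrite (leq_ltn_trans _ jn) // -ltnS.
    have [_ V0] := Vd (pre q s) ltac:(by rewrite size_mkseq addn0).
    rewrite size_mkseq add0n in V0.
    by rewrite V0 ?mulr0.
  by rewrite Z addr0.
move=> t; elim/ltn_ind: t => t IH tj.
rewrite G_formula Hlin //.
have -> : \sum_(s < t) G x d q s z * lin_part (ln t) (d (pre q s)) =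
          \sum_(s < t) r s * lin_part (ln t) (d (pre q s)).
  apply: eq_bigr => s _; rewrite IH //.
  exact: (leq_trans (ltnW (ltn_ord s)) tj).
by rewrite addrAC subrr add0r.
Qed.

Lemma pt_cont x d q m : continuous (pt x d 0 q m).
Proof.
elim: m => [|m IH] z /=; first exact: cvg_id.
apply: (@continuousB _ _ _ (pt x d 0 q m)
  (fun z => (ln (0 + m) (pt x d 0 q m z) - ln (0 + m) x) *: d (pre q m))).
  exact: IH.
apply: (@continuousZr_tmp _ _ _ (fun z => ln (0 + m) (pt x d 0 q m z) - ln (0 + m) x)).
apply: (@continuousB _ _ _ (fun z => ln (0 + m) (pt x d 0 q m z)) (fun=> ln (0 + m) x)).
  by apply: continuous_comp; [exact: IH | exact: ln_cont].
exact: cst_continuous.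
Qed.

Lemma G_cont x d q m : continuous (G x d q m).
Proof.
move=> z; apply: (@continuousB _ _ _ (fun z => ln (0 + m) (pt x d 0 q m z)) (fun=> ln (0 + m) x)).
  by apply: continuous_comp; [exact: pt_cont | exact: ln_cont].
exact: cst_continuous.
Qed.

Lemma RegS x d q j : Reg x d q j.+1 =
  Reg x d q j `&` [set z | sgn (q j) (G x d q j z)].
Proof.
apply/seteqP; split => z.
- move=> H; split; last exact: H j (ltnSn j).
  by move=> m mj; apply: H; exact: (ltn_trans mj (ltnSn j)).
- move=> [H1 H2] m; rewrite ltnS leq_eqVlt => /orP[/eqP->|]; first exact: H2.
  exact: H1.
Qed.

Lemma Reg0 x d q : Reg x d q 0 = setT.
Proof. by apply/seteqP; split => // z _ m; rewrite ltn0. Qed.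

Lemma Reg_closed x d q j : closed (Reg x d q j).
Proof.
elim: j => [|j IH]; first by rewrite Reg0; exact: closedT.
rewrite RegS; apply: closedI => //.
have -> : [set z | sgn (q j) (G x d q j z)] =
  G x d q j @^-1` [set r | sgn (q j) r] by [].
have /continuous_closedP := @G_cont x d q j; apply.
rewrite /sgn; case: (q j); [exact: closed_ge | exact: closed_le].
Qed.

Lemma open_borel (U : set V) : open U -> measurable (U : set (Borel_space R n)).
Proof. by move=> oU; apply: sub_sigma_algebra. Qed.

Lemma closed_borel (A : set V) : closed A -> measurable (A : set (Borel_space R n)).
Proof.
move=> cA; rewrite -(setCK A); apply: measurableC; apply: open_borel.
by rewrite openC.
Qed.

Lemma Reg_borel x d q j : measurable (Reg x d q j : set (Borel_space R n)).
Proof. exact: closed_borel (@Reg_closed x d q j). Qed.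


Lemma Reg_Bfirst x d q j k (hk : (k <= n)%N) : (j <= k)%N ->
  B_first L hk (Reg x d q j).
Proof.
move=> jk; rewrite /B_first /g_sigma_preimage.
under eq_bigr => i' _ do rewrite -(lnE (widen_ord hk i')).
set Gen := \big[setU/set0]_(i < k) _.
suff : measurable (Reg x d q j : set (g_sigma_algebraType Gen)) by [].
have mln : forall i, (i < k)%N ->
    measurable_fun (setT : set (g_sigma_algebraType Gen)) (ln i).
  move=> i ik _ B mB; apply: sub_sigma_algebra.
  apply: (@bigsetU_sup _ i k (fun i => preimage_set_system setT (ln i) measurable) ik).
  by exists B.
have mG : forall m, (m < k)%N ->
    measurable_fun (setT : set (g_sigma_algebraType Gen)) (G x d q m).
  elim/ltn_ind => m IH mk.
  have -> : G x d q m = (fun z => ln m z - ln m x -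
      \sum_(t < m) G x d q t z * lin_part (ln m) (d (pre q t))).
    by apply: funext => z; exact: G_formula.
  apply: measurable_realfun.measurable_funB; first apply: measurable_realfun.measurable_funB.
  - exact: mln.
  - exact: measurable_cst.
  - apply: measurable_sum => t; apply: measurable_realfun.measurable_funM; last exact: measurable_cst.
    apply: IH => //; exact: (ltn_trans (ltn_ord t) mk).
elim: j jk => [|j IH] jk; first by rewrite Reg0; exact: measurableT.
rewrite RegS; apply: measurableI; first by apply: IH; exact: ltnW.
have mGj := mG j jk.
rewrite /sgn; case: (q j).
- have := measurable_fun_le measurableT (measurable_cst (0 : R)) mGj.
  by rewrite setTI.
- have := measurable_fun_le measurableT mGj (measurable_cst (0 : R)).
  by rewrite setTI.
Qed.


Definition qflip (q : nat -> bool) j := fun t => if t == j then ~~ q j else q t.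

Lemma sgn_not b r : ~ sgn b r -> sgn (~~ b) r.
Proof. by rewrite /sgn; case: b => /= h; apply: ltW; rewrite ltNge; apply/negP. Qed.

Lemma Reg_split x d q j : Reg x d q j `<=` Reg x d q j.+1 `|` Reg x d (qflip q j) j.+1.
Proof.
move=> z Hz.
have Eq : forall m, (m <= j)%N -> G x d (qflip q j) m z = G x d q m z.
  move=> m mj; apply: G_eq => t tm; rewrite /qflip.
  have -> : (t == j) = false by apply/negbTE; rewrite neq_ltn (leq_trans tm mj).
  by [].
case: (pselect (sgn (q j) (G x d q j z))) => [s|ns].
- left; rewrite RegS; split; [exact: Hz | exact: s].
- right; rewrite RegS; split.
  + move=> m mj; rewrite (Eq m (ltnW mj)) /qflip.
    have -> : (m == j) = false by apply/negbTE; rewrite neq_ltn mj.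
    exact: Hz.
  + rewrite /= (Eq j (leqnn j)) /qflip eqxx; exact: sgn_not.
Qed.

Section Mass.
Variable mu : {finite_measure set Borel_space R n -> \bar R}.

Lemma muE (A : set V) : measurable (A : set (Borel_space R n)) ->
  mu A = (fine (mu A))%:E.
Proof. move=> mA; rewrite fineK //; exact: fin_num_measure. Qed.

Lemma fine_mu_ge0 (A : set V) : (0 <= fine (mu A))%R.
Proof. apply: fine_ge0; exact: measure_ge0. Qed.

Lemma fine_le (A B : set V) : measurable (A : set (Borel_space R n)) ->
  measurable (B : set (Borel_space R n)) -> A `<=` B -> fine (mu A) <= fine (mu B).
Proof.
move=> mA mB AB; rewrite -lee_fin -(muE mA) -(muE mB).
apply: le_measure => //; rewrite inE; assumption.
Qed.

Lemma fine_sub (A B C : set V) : measurable (A : set (Borel_space R n)) ->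
  measurable (B : set (Borel_space R n)) -> measurable (C : set (Borel_space R n)) ->
  A `<=` B `|` C -> fine (mu A) <= fine (mu B) + fine (mu C).
Proof.
move=> mA mB mC ABC; rewrite -lee_fin EFinD -(muE mA) -(muE mB) -(muE mC).
apply: le_trans (measureU2 _ mB mC).
apply: le_measure => //; rewrite inE //; apply: measurableU; assumption.
Qed.

Lemma pow2S j : (2 ^- j : R) = 2 * 2 ^- j.+1.
Proof. rewrite exprS invfM mulrA mulfV ?mul1r //; exact: pnatr_eq0. Qed.

Lemma Reg_mass x d :
  (forall q, mu (Reg x d q n) = ((2 ^- n)%:E * mu setT)%E) ->
  forall j q, (j <= n)%N -> fine (mu (Reg x d q j)) = 2 ^- j * fine (mu setT).
Proof.
move=> Hn.
have HnR : forall q, fine (mu (Reg x d q n)) = 2 ^- n * fine (mu setT).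
  move=> q; rewrite Hn (muE measurableT) //.
have up : forall i j q, (j + i = n)%N -> fine (mu (Reg x d q j)) <= 2 ^- j * fine (mu setT).
  elim => [|i IH] j q ji.
    rewrite addn0 in ji; rewrite ji HnR; exact: lexx.
  have j1 : (j.+1 + i = n)%N by rewrite addSnnS.
  have := fine_sub (@Reg_borel x d q j) (@Reg_borel x d q j.+1)
    (@Reg_borel x d (qflip q j) j.+1) (@Reg_split x d q j).
  have := IH _ q j1; have := IH _ (qflip q j) j1; rewrite (pow2S j); lra.
have low : forall j q, (j <= n)%N -> 2 ^- j * fine (mu setT) <= fine (mu (Reg x d q j)).
  elim => [|j IH] q jn.
    rewrite Reg0 expr0 invr1 mul1r; exact: lexx.
  have := fine_sub (@Reg_borel x d q j) (@Reg_borel x d q j.+1)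
    (@Reg_borel x d (qflip q j) j.+1) (@Reg_split x d q j).
  have := IH q (ltnW jn).
  have := up (n - j.+1)%N j.+1 (qflip q j) (subnKC jn).
  rewrite (pow2S j); lra.
move=> j q jn; apply/eqP; rewrite eq_le low // andbT.
apply: up (n - j)%N _ _ _; rewrite subnKC //.
Qed.

End Mass.

Definition ssgn (b : bool) (r : R) : Prop := if b then 0 < r else r < 0.
Definition qcons (b : bool) (q : nat -> bool) := fun t => if t is t'.+1 then q t' else b.
Definition rcons0 (a : R) (r : nat -> R) := fun t => if t is t'.+1 then r t' else a.
Definition uvec (q : nat -> bool) : nat -> R := fun t => if q t then 1 else -1.
Definition Tq (j : nat) (e : seq bool -> R) (q : nat -> bool) (r : nat -> R) :=
  \sum_(t < j) r t * e (pre q t).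
Definition Hyp j c0 e := forall q,
  (forall r, (forall t, (t < j)%N -> sgn (q t) (r t)) -> 0 <= c0 + Tq j e q r) ->
  forall r, (forall t, (t < j)%N -> ssgn (q t) (r t)) -> c0 + Tq j e q r <= 0.

Lemma uvec_sgn q t : sgn (q t) (uvec q t).
Proof. rewrite /sgn /uvec; case: (q t); lra. Qed.

Lemma uvec_ssgn q t : ssgn (q t) (uvec q t).
Proof. rewrite /ssgn /uvec; case: (q t); lra. Qed.

Lemma Tq_cons j e b q r : Tq j.+1 e (qcons b q) r =
  r 0%N * e [::] + Tq j (fun p => e (b :: p)) q (fun t => r t.+1).
Proof.
rewrite /Tq big_ord_recl /=; congr (_ + _); apply: eq_bigr => t _.
by rewrite pre_S.
Qed.

Lemma pos_cons j e q' :
  (forall r, (forall t, (t < j)%N -> sgn (q' t) (r t)) ->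
     0 <= Tq j (fun p => e ((0 <= e [::]) :: p)) q' r) ->
  forall r, (forall t, (t < j.+1)%N -> sgn (qcons (0 <= e [::]) q' t) (r t)) ->
    0 <= Tq j.+1 e (qcons (0 <= e [::]) q') r.
Proof.
move=> Hq' r Hr; rewrite Tq_cons; apply: addr_ge0.
  have := Hr 0%N isT; rewrite /sgn /qcons; case: lerP => he hr; nra.
apply: Hq' => t tj; exact: (Hr t.+1 tj).
Qed.

Lemma greedy j e : exists q, forall r,
  (forall t, (t < j)%N -> sgn (q t) (r t)) -> 0 <= Tq j e q r.
Proof.
elim: j e => [|j IH] e.
  exists (fun _ => true) => r _; rewrite /Tq big_ord0; exact: lexx.
have [q' Hq'] := IH (fun p => e ((0 <= e [::]) :: p)).
exists (qcons (0 <= e [::]) q'); exact: pos_cons.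
Qed.

Lemma alg0 j : forall e, Hyp j 0 e -> forall p, (size p < j)%N -> e p = 0.
Proof.
elim: j => [|j IH] e H p; first by rewrite ltn0.
have [q' Hq'] := greedy j (fun p => e ((0 <= e [::]) :: p)).
have E0 : e [::] = 0.
  have := H (qcons (0 <= e [::]) q').
  have P : forall r, (forall t, (t < j.+1)%N -> sgn (qcons (0 <= e [::]) q' t) (r t)) ->
      0 <= 0 + Tq j.+1 e (qcons (0 <= e [::]) q') r.
    move=> r Hr; rewrite add0r; exact: pos_cons.
  move=> /(_ P (uvec (qcons (0 <= e [::]) q'))) /(_ (fun t _ => uvec_ssgn _ t)).
  rewrite add0r Tq_cons.
  have T0 := Hq' (uvec q') (fun t _ => uvec_sgn q' t).
  rewrite /uvec /= => Hle; rewrite /uvec in T0.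
  have [he|he] := lerP 0 (e [::]).
  - rewrite he in Hle T0; lra.
  - rewrite (lt_geF he) in Hle T0; lra.
have Hsub : forall b, Hyp j 0 (fun p => e (b :: p)).
  move=> b q2 Pos2 r2 open2.
  have := H (qcons b q2).
  have P : forall r, (forall t, (t < j.+1)%N -> sgn (qcons b q2 t) (r t)) ->
      0 <= 0 + Tq j.+1 e (qcons b q2) r.
    move=> r Hr; rewrite Tq_cons E0 mulr0 add0r.
    apply: Pos2 => t tj; exact: (Hr t.+1 tj).
  move=> /(_ P (rcons0 (if b then 1 else -1) r2)).
  have O : forall t, (t < j.+1)%N -> ssgn (qcons b q2 t) (rcons0 (if b then 1 else -1) r2 t).
    case=> [|t] tj /=; last exact: open2.
    rewrite /ssgn; case: (b) => /=; lra.
  move=> /(_ O); rewrite Tq_cons E0 mulr0 add0r; exact.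
case: p => [|b p] hp; first exact: E0.
exact: (IH _ (Hsub b) p hp).
Qed.

Lemma alg j c0 e : Hyp j c0 e -> Hyp j (- c0) (fun p => - e p) ->
  c0 = 0 /\ forall p, (size p < j)%N -> e p = 0.
Proof.
have cle : forall c e', Hyp j c e' -> c <= 0.
  move=> c e' H; rewrite leNgt; apply/negP => cpos.
  have [q Hq] := greedy j e'.
  have P : forall r, (forall t, (t < j)%N -> sgn (q t) (r t)) -> 0 <= c + Tq j e' q r.
    move=> r Hr; have := Hq r Hr; lra.
  have := H q P (uvec q) (fun t _ => uvec_ssgn q t).
  have := Hq (uvec q) (fun t _ => uvec_sgn q t); lra.
move=> H1 H2; have c1 := cle _ _ H1; have c2 := cle _ _ H2.
have c00 : c0 = 0 by lra.
split => //; apply: alg0; rewrite -c00; exact: H1.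
Qed.


Lemma Ostrict_open x d q j :
  open [set w : V | forall t, (t < j)%N -> ssgn (q t) (G x d q t w)].
Proof.
elim: j => [|j IH].
  have -> : [set w : V | forall t, (t < 0)%N -> ssgn (q t) (G x d q t w)] = setT.
    apply/seteqP; split => // w _ t; rewrite ltn0.
  exact: openT.
have -> : [set w : V | forall t, (t < j.+1)%N -> ssgn (q t) (G x d q t w)] =
  [set w : V | forall t, (t < j)%N -> ssgn (q t) (G x d q t w)] `&`
  G x d q j @^-1` [set r | ssgn (q j) r].
  apply/seteqP; split => w.
  - move=> H; split; last exact: H j (ltnSn j).
    move=> m mj; apply: H; exact: (ltn_trans mj (ltnSn j)).
  - move=> [H1 H2] m; rewrite ltnS leq_eqVlt => /orP[/eqP->|]; first exact: H2.
    exact: H1.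
apply: openI; first exact: IH.
have /continuousP := @G_cont x d q j; apply.
rewrite /ssgn; case: (q j); [exact: open_gt | exact: open_lt].
Qed.

Lemma meas_contra (mu : {finite_measure set Borel_space R n -> \bar R}) (S T O : set V) :
  measurable (S : set (Borel_space R n)) -> measurable (T : set (Borel_space R n)) ->
  open O -> (0 < mu O)%E -> S `<=` T -> O `<=` T -> (forall w, O w -> ~ S w) ->
  fine (mu S) = fine (mu T) -> False.
Proof.
move=> mS mT oO muO ST OT OS E.
have mO := open_borel oO.
have mTS : measurable (T `\` S : set (Borel_space R n)) by apply: measurableD.
have H := measureDI mu mT mS.
rewrite setIidr // in H.
have HO : 0 < fine (mu O) by rewrite -lte_fin -(muE mu mO).
have HOT : fine (mu O) <= fine (mu (T `\` S)).
  apply: fine_le => // w Ow; split; [exact: OT | exact: OS].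
have HT : fine (mu T) = fine (mu (T `\` S)) + fine (mu S).
  rewrite H fineD //; exact: fin_num_measure.
clear H muO; lra.
Qed.


Lemma main_step (mu nu : {finite_measure set Borel_space R n -> \bar R}) x y dx dy k
  (hk : (k <= n)%N) :
  valid dx 0 -> in_Mstar mu ->
  (forall A, B_first L hk A -> mu A = nu A) ->
  (forall j q, (j <= n)%N -> fine (mu (Reg x dx q j)) = 2 ^- j * fine (mu setT)) ->
  (forall j q, (j <= n)%N -> fine (nu (Reg y dy q j)) = 2 ^- j * fine (nu setT)) ->
  forall j, (j < k)%N ->
  (forall i, (i < j)%N -> ln i x = ln i y /\
     forall p, (size p < i)%N -> lin_part (ln i) (dx p) = lin_part (ln i) (dy p)) ->
  Hyp j (ln j y - ln j x) (fun p => lin_part (ln j) (dy p) - lin_part (ln j) (dx p)).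
Proof.
move=> Vx Mmu HB Mx My j jk HI.
have jn : (j < n)%N := leq_trans jk hk.
have Geq : forall q i z, (i < j)%N -> G x dx q i z = G y dy q i z.
  move=> q i z; elim/ltn_ind: i => i IH ij.
  rewrite G_formula [RHS]G_formula; have [Hxy Hlin] := HI i ij.
  rewrite Hxy; congr (_ - _); apply: eq_bigr => t _.
  rewrite (IH t (ltn_ord t) (ltn_trans (ltn_ord t) ij)) Hlin //.
  by rewrite size_mkseq.
have dform : forall q z, G x dx q j z - G y dy q j z =
    (ln j y - ln j x) + Tq j (fun p => lin_part (ln j) (dy p) - lin_part (ln j) (dx p))
      q (fun t => G x dx q t z).
  move=> q z; rewrite G_formula [G y dy q j z]G_formula.
  have -> : Tq j (fun p => lin_part (ln j) (dy p) - lin_part (ln j) (dx p))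
      q (fun t => G x dx q t z) =
      \sum_(t < j) G x dx q t z * lin_part (ln j) (dy (pre q t)) -
      \sum_(t < j) G x dx q t z * lin_part (ln j) (dx (pre q t)).
    rewrite /Tq -sumrB; apply: eq_bigr => t _; rewrite mulrBr //.
  have -> : \sum_(t < j) G y dy q t z * lin_part (ln j) (dy (pre q t)) =
            \sum_(t < j) G x dx q t z * lin_part (ln j) (dy (pre q t)).
    apply: eq_bigr => t _; rewrite Geq //.
  ring.
have RegEq : forall q w, Reg x dx q j w <-> Reg y dy q j w.
  move=> q w; split => H m mj.
  - rewrite -Geq //; exact: H m mj.
  - rewrite Geq //; exact: H m mj.
have BT : B_first L hk setT.
  have := @Reg_Bfirst y dy (fun _ => true) 0 k hk (leq0n k); rewrite Reg0; exact.
have Mass : forall q, fine (mu (Reg y dy q j.+1)) = fine (mu (Reg x dx q j.+1)).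
  move=> q; rewrite (HB _ (@Reg_Bfirst y dy q j.+1 k hk jk)) My // Mx //.
  rewrite (HB _ BT); reflexivity.
move=> q Pos r ropen; rewrite leNgt; apply/negP => Dpos.
set D := _ + _ in Dpos.
have [z Hz] := @G_surj x dx q j (fun t => if t == j then D / 2 else r t) Vx jn.
have Hr : forall t, (t < j)%N -> G x dx q t z = r t.
  move=> t tj; have := Hz t (ltnW tj).
  have -> : (t == j) = false by apply/negbTE; rewrite neq_ltn tj.
  exact.
have Hj : G x dx q j z = D / 2.
  have := Hz j (leqnn j); rewrite eqxx; exact.
have Td : Tq j (fun p => lin_part (ln j) (dy p) - lin_part (ln j) (dx p)) q
    (fun t => G x dx q t z) =
   Tq j (fun p => lin_part (ln j) (dy p) - lin_part (ln j) (dx p)) q r.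
  apply: eq_bigr => t _; rewrite Hr //.
have dz := dform q z; rewrite Td -/D Hj in dz.
have Hyj : G y dy q j z = - (D / 2) by lra.
pose O := [set w : V | (forall t, (t < j)%N -> ssgn (q t) (G x dx q t w)) /\
  (G y dy q j w < 0 /\ 0 < G x dx q j w)].
have oO : open O.
  have -> : O = [set w : V | forall t, (t < j)%N -> ssgn (q t) (G x dx q t w)] `&`
    (G y dy q j @^-1` [set s | s < 0] `&` G x dx q j @^-1` [set s | 0 < s]).
    apply/seteqP; split => w [H1 [H2 H3]]; split => //; split => //.
  apply: openI; first exact: Ostrict_open.
  apply: openI.
  + have /continuousP := @G_cont y dy q j; apply; exact: open_lt.
  + have /continuousP := @G_cont x dx q j; apply; exact: open_gt.
have zO : O z.
  split; first by move=> t tj; rewrite Hr //; exact: ropen.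
  rewrite Hyj Hj; split; lra.
have muO : (0 < mu O)%E by apply: Mmu.2 => //; exists z.
have Hge : forall w, Reg x dx q j w -> 0 <= G x dx q j w - G y dy q j w.
  move=> w Hw; rewrite dform; apply: Pos => t tj; exact: Hw t tj.
case E : (q j).
- apply: (@meas_contra mu (Reg y dy q j.+1) (Reg x dx q j.+1) O
    (Reg_borel _ _ _ _) (Reg_borel _ _ _ _) oO muO).
  + move=> w; rewrite !RegS => -[H1 H2]; split; first by apply/RegEq.
    have := Hge w (proj2 (RegEq q w) H1); move: H2; rewrite /= E /sgn; lra.
  + move=> w [H1 [H2 H3]]; rewrite RegS; split.
      move=> t tj; have := H1 t tj; rewrite /sgn /ssgn; case: (q t); lra.
    rewrite /= E /sgn; lra.
  + move=> w [H1 [H2 H3]]; rewrite RegS => -[_]; rewrite /= E /sgn; lra.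
  + exact: Mass.
- apply: (@meas_contra mu (Reg x dx q j.+1) (Reg y dy q j.+1) O
    (Reg_borel _ _ _ _) (Reg_borel _ _ _ _) oO muO).
  + move=> w; rewrite !RegS => -[H1 H2]; split; first by apply/RegEq.
    have := Hge w H1; move: H2; rewrite /= E /sgn; lra.
  + move=> w [H1 [H2 H3]]; rewrite RegS; split.
      apply/RegEq => t tj; have := H1 t tj; rewrite /sgn /ssgn; case: (q t); lra.
    rewrite /= E /sgn; lra.
  + move=> w [H1 [H2 H3]]; rewrite RegS => -[_]; rewrite /= E /sgn; lra.
  + symmetry; exact: Mass.
Qed.


Lemma center_data (mu : {finite_measure set Borel_space R n -> \bar R}) x :
  is_center mu L x -> exists d, valid d 0 /\
    forall j q, (j <= n)%N -> fine (mu (Reg x d q j)) = 2 ^- j * fine (mu setT).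
Proof.
move=> [P [HP HE]]; have [d [Vd Hd]] := yya_cones HP.
exists d; split; first exact: Vd.
apply: Reg_mass => q.
rewrite -Cone0; exact: HE _ (Hd q).
Qed.

Lemma part2 k (hk : (k <= n)%N) (mu nu : {finite_measure set Borel_space R n -> \bar R})
  x y : in_Mstar mu -> in_Mstar nu -> (forall A, B_first L hk A -> mu A = nu A) ->
  is_center mu L x -> is_center nu L y -> forall i, (i < k)%N -> ln i x = ln i y.
Proof.
move=> Mmu Mnu HB Cx Cy.
have [dx [Vx Mx]] := center_data Cx.
have [dy [Vy My]] := center_data Cy.
have HB' : forall A, B_first L hk A -> nu A = mu A.
  move=> A hA; rewrite HB //.
have claim : forall j, (j <= k)%N -> forall i, (i < j)%N -> ln i x = ln i y /\
    forall p, (size p < i)%N -> lin_part (ln i) (dx p) = lin_part (ln i) (dy p).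
  elim => [|j IH] jk i ij; first by rewrite ltn0 in ij.
  have IH' := IH (ltnW jk).
  rewrite ltnS leq_eqVlt in ij; case/orP: ij => [/eqP -> | ij]; last exact: IH' i ij.
  have H1 := @main_step mu nu x y dx dy k hk Vx Mmu HB Mx My j jk IH'.
  have IH'' : forall i, (i < j)%N -> ln i y = ln i x /\ forall p, (size p < i)%N ->
      lin_part (ln i) (dy p) = lin_part (ln i) (dx p).
    move=> i0 i0j; have [a b] := IH' i0 i0j; split; first by rewrite a.
    move=> p hp; rewrite b //.
  have H2 := @main_step nu mu y x dy dx k hk Vy Mnu HB' My Mx j jk IH''.
  have H2' : Hyp j (- (ln j y - ln j x))
      (fun p => - (lin_part (ln j) (dy p) - lin_part (ln j) (dx p))).
    rewrite opprB.
    have -> : (fun p => - (lin_part (ln j) (dy p) - lin_part (ln j) (dx p))) =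
        (fun p => lin_part (ln j) (dx p) - lin_part (ln j) (dy p)).
      apply: funext => p; rewrite opprB //.
    exact: H2.
  have [c0 e0] := alg H1 H2'.
  split; first lra.
  move=> p hp; have := e0 p hp; lra.
move=> i ik; exact: (claim k (leqnn k) i ik).1.
Qed.

End Main.

Unset Implicit Arguments.
Set Strict Implicit.

Theorem proposition10 (R : realType) (n : nat) (L : 'I_n -> 'rV[R]_n -> R) :
  coord_system L ->
  (forall (mu : {finite_measure set Borel_space R n -> \bar R}) (x y : 'rV[R]_n),
      in_Mstar mu -> is_center mu L x -> is_center mu L y -> x = y) /\
  (forall (k : nat) (hk1 : (1 <= k)%N) (hk : (k <= n)%N)
          (mu nu : {finite_measure set Borel_space R n -> \bar R})
          (x y : 'rV[R]_n),
      in_Mstar mu -> in_Mstar nu ->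
      (forall A, B_first L hk A -> mu A = nu A) ->
      is_center mu L x -> is_center nu L y ->
      forall i : 'I_n, (i < k)%N -> L i x = L i y).
Proof.
move=> HL; split.
- move=> mu x y Mmu Cx Cy.
  have H := @part2 R n L HL n (leqnn n) mu mu x y Mmu Mmu (fun A _ => erefl) Cx Cy.
  case: HL => _ /bij_inj Hinj; apply: Hinj; apply/rowP => i; rewrite !mxE.
  rewrite -!lnE; exact: H i (ltn_ord i).
- move=> k hk1 hk mu nu x y Mmu Mnu HB Cx Cy i ik.
  rewrite -!lnE; exact: (@part2 R n L HL k hk mu nu x y Mmu Mnu HB Cx Cy i ik).
Qed.
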